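(* Let $\mathcal{A}=(\{1,\dots,k\},\sqsubseteq,<)$ be a finite linearly ordered poset where $<$ is the usual order of integers. Let $D_1,\dots,D_m$ be all the nonempty downsets of $(\{1,\dots,k\},\sqsubseteq)$, enumerated so that $D_1<_{\mathit{alex}}D_2<_{\mathit{alex}}\dots<_{\mathit{alex}}D_m$. Let $n\ge m$ and let $u\in W^n_m(\{0\})$ be an $m$-parameter word of length $n$ over the alphabet $\{0\}$; put $X_\alpha=u^{-1}(x_\alpha)$ for $1\le\alpha\le m$, and $a_i=\bigcup\{X_\alpha: i\in D_\alpha\}$ for $1\le i\le k$. Then the map $i\mapsto a_i$ is an embedding of $\mathcal{A}$ into the linearly ordered poset $(\mathcal{P}(\{1,\dots,n\}),\supseteq,<_{\overline{\mathit{lex}}})$; that is, it is injective, $i\sqsubseteq j\iff a_i\supseteq a_j$, and $i<j\iff a_i<_{\overline{\mathit{lex}}}a_j$.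
   Context: A downset in $(A,\sqsubseteq)$ is a set $B\subseteq A$ such that $x\in B$, $y\sqsubseteq x$ imply $y\in B$. For a finite linearly ordered set $(L,<)$ and $A,B\subseteq L$: $A<_{\mathit{alex}}B$ iff $A\subsetneq B$, or $A,B$ are $\subseteq$-incomparable and $\max(A\setminus B)<\max(B\setminus A)$; $A<_{\overline{\mathit{lex}}}B$ iff $A\supsetneq B$, or $A,B$ are incomparable and $\min(A\setminus B)<\min(B\setminus A)$. Both are linear orders on $\mathcal{P}(L)$. With variables $x_1,x_2,\dots$ disjoint from a finite alphabet $A$, an $m$-parameter word of length $n$ over $A$ is a word $w\in(A\cup\{x_1,\dots,x_m\})^n$, viewed as a map $w:\{1,\dots,n\}\to A\cup\{x_1,\dots,x_m\}$, such that each $x_1,\dots,x_m$ occurs in $w$ and $\min w^{-1}(x_i)<\min w^{-1}(x_j)$ for $1\le i<j\le m$; $W^n_m(A)$ is the set of such words. A linearly ordered poset is $(A,\sqsubseteq,<)$ with $(A,\sqsubseteq)$ a poset and $<$ a linear order extending $\sqsubseteq$; an embedding is an injection preserving and reflecting both $\sqsubseteq$ and $<$. *)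

(* Defs.v *)
From mathcomp Require Import all_boot all_order.
Set Implicit Arguments. Unset Strict Implicit. Unset Printing Implicit Defensive.

(* Convention: the ground sets {1,...,k} and {1,...,n} are represented by
   'I_k = {0,...,k-1} and 'I_n = {0,...,n-1} (shift by one, order-preserving). *)

(* max / min (as natural numbers) of a set of ordinals; only used on nonempty
   sets, where they are the genuine maximum / minimum. *)
Definition setmax (n : nat) (S : {set 'I_n}) : nat := \max_(i in S) val i.
Definition setmin (n : nat) (S : {set 'I_n}) : nat := \big[minn/n]_(i in S) val i.

Definition alex_lt (n : nat) (A B : {set 'I_n}) : bool :=
  (A \proper B) ||
  [&& ~~ (A \subset B), ~~ (B \subset A) & setmax (A :\: B) < setmax (B :\: A)].

Definition lexbar_lt (n : nat) (A B : {set 'I_n}) : bool :=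
  (B \proper A) ||
  [&& ~~ (A \subset B), ~~ (B \subset A) & setmin (A :\: B) < setmin (B :\: A)].

Definition is_poset (k : nat) (le : rel 'I_k) : Prop :=
  [/\ reflexive le, antisymmetric le & transitive le].

Definition extends_order (k : nat) (le : rel 'I_k) : Prop :=
  forall i j : 'I_k, le i j -> (val i <= val j)%N.

Definition is_downset (k : nat) (le : rel 'I_k) (B : {set 'I_k}) : Prop :=
  forall x y : 'I_k, x \in B -> le y x -> y \in B.

(* letters of a parameter word over the alphabet {0}: None = 0, Some a = x_(a+1) *)
Definition param_var (n m : nat) (u : 'I_n -> option 'I_m) (a : 'I_m) : {set 'I_n} :=
  [set i | u i == Some a].

Definition is_param_word (n m : nat) (u : 'I_n -> option 'I_m) : Prop :=
  (forall a : 'I_m, exists i : 'I_n, u i = Some a) /\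
  (forall a b : 'I_m, val a < val b ->
     setmin (param_var u a) < setmin (param_var u b)).

(* Main.v *)
Require Import Defs.
From mathcomp Require Import all_boot all_order.

Lemma setmin_le_n n (S : {set 'I_n}) : setmin S <= n.
Proof. rewrite /setmin; apply: (big_ind (fun y => y <= n)) => //.
  by move=> x y Hx Hy; rewrite geq_min Hx. by move=> i _; exact: ltnW (ltn_ord i). Qed.

Lemma setmin_le n (S : {set 'I_n}) x : x \in S -> setmin S <= val x.
Proof. move=> Hx; rewrite /setmin.
have : x \in index_enum 'I_n by rewrite mem_index_enum.
elim: (index_enum 'I_n) => [//|y r IH] /=; rewrite inE big_cons.
case/orP=> [/eqP <-|/IH Hr]; first by rewrite Hx geq_minl.
case: ifP => _ //; exact: leq_trans (geq_minr _ _) Hr. Qed.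

Lemma setmin_mono n (A B : {set 'I_n}) : A \subset B -> setmin B <= setmin A.
Proof. move=> /subsetP AB; rewrite {2}/setmin.
  apply: (big_ind (fun y => setmin B <= y)); first exact: setmin_le_n.
  by move=> x y Hx Hy; rewrite leq_min Hx.
  by move=> i Hi; apply: setmin_le; apply: AB. Qed.

Lemma setmin_gt n (S : {set 'I_n}) c : S != set0 ->
  (forall x, x \in S -> c < val x) -> c < setmin S.
Proof. case/set0Pn => x0 Hx0 H; rewrite /setmin.
  apply: (big_ind (fun y => c < y)).
  exact: leq_trans (H _ Hx0) (ltnW (ltn_ord x0)).
  by move=> x y Hx Hy; rewrite leq_min Hx. by []. Qed.

Lemma lexbar_irr n (A : {set 'I_n}) : ~~ lexbar_lt A A.
Proof. by rewrite /lexbar_lt properE subxx. Qed.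

Lemma lexbar_asym n (A B : {set 'I_n}) : lexbar_lt A B -> lexbar_lt B A -> False.
Proof.
rewrite /lexbar_lt => /orP[H1|/and3P[H1 H2 H3]] /orP[H4|/and3P[H4 H5 H6]].
- by move: (proper_subn H1); rewrite (proper_sub H4).
- by move: H4; rewrite (proper_sub H1).
- by move: H1; rewrite (proper_sub H4).
- by move: (ltn_trans H3 H6); rewrite ltnn.
Qed.

Theorem mainTheorem4 (k : nat) (le : rel 'I_k)
  (Hposet : is_poset le) (Hlin : extends_order le)
  (m : nat) (D : 'I_m -> {set 'I_k})
  (HDdown : forall a : 'I_m, D a != set0 /\ is_downset le (D a))
  (HDall : forall B : {set 'I_k}, B != set0 -> is_downset le B ->
             exists a : 'I_m, D a = B)
  (HDord : forall a b : 'I_m, val a < val b -> alex_lt (D a) (D b))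
  (n : nat) (Hnm : m <= n)
  (u : 'I_n -> option 'I_m) (Hu : is_param_word u) :
  let a := fun i : 'I_k => \bigcup_(al : 'I_m | i \in D al) param_var u al in
  [/\ injective a,
      (forall i j : 'I_k, le i j <-> a j \subset a i) &
      (forall i j : 'I_k, val i < val j <-> lexbar_lt (a i) (a j))].
Proof.
move=> a.
case: Hposet => Hrefl Hanti Htrans.
case: Hu => Hu1 Hu2.
have memA : forall i x, (x \in a i) = (if u x is Some al then i \in D al else false).
  move=> i x; apply/bigcupP/idP.
    by case=> al Hal; rewrite /param_var inE => /eqP ->.
  case E: (u x) => [al|] // Hal; exists al => //.
  by rewrite /param_var inE E.
have downP : forall i, exists al, D al = [set y | le y i].
  move=> i; apply: HDall.
    by apply/set0Pn; exists i; rewrite inE Hrefl.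
  move=> x y; rewrite !inE => Hx Hy; exact: Htrans Hy Hx.
have sub2 : forall i j, le i j <-> a j \subset a i.
  move=> i j; split.
    move=> Hij; apply/subsetP => x; rewrite !memA.
    case: (u x) => [al|] // Hj.
    exact: (HDdown al).2 Hj Hij.
  move=> /subsetP Hs.
  have [al Hal] := downP j.
  have [x Hx] := Hu1 al.
  have : x \in a j by rewrite memA Hx Hal inE Hrefl.
  move/Hs; rewrite memA Hx Hal inE; done.
have inj : injective a.
  move=> i j Hij; apply: Hanti; apply/andP; split; apply/sub2; rewrite Hij //.
have fwd : forall i j : 'I_k, val i < val j -> lexbar_lt (a i) (a j).
  move=> i j Hij.
  have Hne : i != j by apply/eqP => E; move: Hij; rewrite E ltnn.
  case Hle: (le i j).
    apply/orP; left; rewrite properEneq (proj1 (sub2 _ _) Hle) andbT.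
    by apply/eqP => E; move/eqP: Hne; apply; apply: inj.
  have Hle' : le j i = false.
    apply/negbTE/negP => H; move: (Hlin _ _ H); rewrite leqNgt Hij.
    done.
  have N1 : ~~ (a j \subset a i) by apply/negP => /sub2; rewrite Hle.
  have N2 : ~~ (a i \subset a j) by apply/negP => /sub2; rewrite Hle'.
  apply/orP; right; rewrite N1 N2 /=.
  have [al Hal] := downP i.
  have [x0 Hx0] := Hu1 al.
  apply: (@leq_ltn_trans (setmin (param_var u al))).
    apply: setmin_mono; apply/subsetP => x; rewrite /param_var !inE => /eqP Ex.
    by rewrite !memA Ex Hal !inE Hrefl Hle'.
  apply: setmin_gt.
    case/subsetPn: N1 => y Hy Hy'; apply/set0Pn; exists y; by rewrite inE Hy Hy'.
  move=> y; rewrite inE !memA; case Ey: (u y) => [be|] //.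
  case/andP => Hib Hjb.
  have Hab : val al < val be.
    rewrite ltnNge leq_eqVlt; apply/negP => /orP[/eqP E|Hlt].
      have E' : be = al by apply: val_inj.
      by move: Hjb; rewrite E' Hal inE Hle'.
    have := HDord _ _ Hlt; rewrite /alex_lt => /orP[Hp|/and3P[_ _ Hm]].
      move: (subsetP (proper_sub Hp) j Hjb); by rewrite Hal inE Hle'.
    have H1 : val j <= setmax (D be :\: D al).
      rewrite /setmax; apply: (leq_bigmax_cond j (P := fun x => x \in D be :\: D al)).
      by rewrite inE Hjb Hal inE Hle'.
    have H2 : setmax (D al :\: D be) <= val i.
      rewrite /setmax; apply/bigmax_leqP => x; rewrite inE Hal inE => /andP[_ Hx].
      exact: Hlin.
    move: (leq_ltn_trans H1 Hm) => H3; move: (leq_trans H3 H2).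
    by rewrite ltnNge (ltnW Hij).
  apply: (leq_trans (Hu2 _ _ Hab)); apply: setmin_le.
  by rewrite /param_var inE Ey.
split => // i j; split; first exact: fwd.
case: (ltngtP (val i) (val j)) => // [Hji|E] H.
  by case: (lexbar_asym _ _ _ H (fwd _ _ Hji)).
by move: H; rewrite (val_inj E) (negbTE (lexbar_irr _ _)).
Qed.
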